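(* Let $I\subseteq\mathbb{K}[x_1,\dots,x_d]$ be a pure difference ideal. (1) Suppose $I=\langle p\rangle$ where $p$ is a canonical pure difference binomial, and let $L\subseteq\mathbb{Z}^d$ be the lattice spanned by the exponent vector of $p$. Then $I=I_L$; if moreover $p$ is irreducible, then $I=I_{\operatorname{Sat}(L)}$. (2) Suppose $I=\langle p_1,\dots,p_k\rangle$ with $p_1,\dots,p_k$ pure difference binomials with exponent vectors $\bm{v}_1,\dots,\bm{v}_k$, at least one of which lies in $\mathbb{Z}_{>0}^d$. Let $J$ be the ideal generated by the canonical binomials of $\bm{v}_1,\dots,\bm{v}_k$ and $L$ the lattice spanned by $\bm{v}_1,\dots,\bm{v}_k$. Then $J=I_L$.
   Context: $\mathbb{K}=\overline{\mathbb{Q}}$. A pure difference binomial is $\bm{x}^{\bm{\alpha}}-\bm{x}^{\bm{\beta}}$ with $\bm{\alpha},\bm{\beta}\in\mathbb{N}^d$; its exponent vector is $\bm{\alpha}-\bm{\beta}$; a pure difference ideal is an ideal generated by pure difference binomials. For $\bm{v}\in\mathbb{Z}^d$, with $\bm{v}_+=(\max\{v_1,0\},\dots,\max\{v_d,0\})$ and $\bm{v}_-=\bm{v}_+-\bm{v}$, the canonical binomial of $\bm{v}$ is $\bm{x}^{\bm{v}_+}-\bm{x}^{\bm{v}_-}$; a canonical pure difference binomial is the canonical binomial of some vector. For a lattice $L\subseteq\mathbb{Z}^d$, $I_L=\langle \bm{x}^{\bm{\alpha}}-\bm{x}^{\bm{\beta}} : \bm{\alpha},\bm{\beta}\in\mathbb{N}^d,\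 \bm{\alpha}-\bm{\beta}\in L\rangle$ and $\operatorname{Sat}(L)=\{\bm{u}\in\mathbb{Z}^d : c\bm{u}\in L\text{ for some } c\in\mathbb{Z}\setminus\{0\}\}$. *)

(* Defs.v *)
From HB Require Import structures.
From mathcomp Require Import all_boot all_order all_algebra all_field.
From mathcomp Require Import mpoly.
Set Implicit Arguments. Unset Strict Implicit. Unset Printing Implicit Defensive.
Import Order.TTheory GRing.Theory Num.Theory.
Local Open Scope ring_scope.

(* The polynomial ring K[x_1,...,x_d] with K = algC (algebraic closure of Q). *)
Notation Kpoly d := {mpoly algC[d]}.

Definition pdbinom (d : nat) (a b : 'X_{1..d}) : Kpoly d := 'X_[a] - 'X_[b].

Definition expvec (d : nat) (a b : 'X_{1..d}) : 'rV[int]_d :=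
  \row_i ((a i)%:Z - (b i)%:Z).

Definition vpos (d : nat) (v : 'rV[int]_d) : 'X_{1..d} :=
  [multinom (if (0 <= v ord0 i)%R then absz (v ord0 i) else 0%N) | i < d].
Definition vneg (d : nat) (v : 'rV[int]_d) : 'X_{1..d} :=
  [multinom (if (v ord0 i < 0)%R then absz (v ord0 i) else 0%N) | i < d].

Definition canon_binom (d : nat) (v : 'rV[int]_d) : Kpoly d :=
  pdbinom (vpos v) (vneg v).

Definition ideal_gen (d : nat) (S : Kpoly d -> Prop) : Kpoly d -> Prop :=
  fun f => exists (n : nat) (c g : 'I_n -> Kpoly d),
    (forall i, S (g i)) /\ f = \sum_(i < n) c i * g i.

Definition same_ideal (d : nat) (I J : Kpoly d -> Prop) : Prop :=
  forall f, I f <-> J f.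

Definition lattice_span (d k : nat) (v : 'I_k -> 'rV[int]_d) : 'rV[int]_d -> Prop :=
  fun u => exists c : 'I_k -> int, u = \sum_(i < k) v i *~ c i.

Definition Sat (d : nat) (L : 'rV[int]_d -> Prop) : 'rV[int]_d -> Prop :=
  fun u => exists c : int, c != 0 /\ L (u *~ c).

Definition lattice_ideal (d : nat) (L : 'rV[int]_d -> Prop) : Kpoly d -> Prop :=
  ideal_gen (fun f => exists a b : 'X_{1..d}, L (expvec a b) /\ f = pdbinom a b).

Definition is_unit_poly (d : nat) (f : Kpoly d) : Prop := exists h, f * h = 1.
Definition irreducible_mpoly (d : nat) (p : Kpoly d) : Prop :=
  p != 0 /\ ~ is_unit_poly p /\
  forall f g : Kpoly d, p = f * g -> is_unit_poly f \/ is_unit_poly g.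

(* Main.v *)
Require Import Defs.
From HB Require Import structures.
From mathcomp Require Import all_boot all_order all_algebra all_field.
From mathcomp Require Import mpoly zify ring.
Import Order.TTheory GRing.Theory Num.Theory.
Local Open Scope ring_scope.
Set Implicit Arguments. Unset Strict Implicit.

Section Ideal.
Variable d : nat.
Implicit Types S T : Kpoly d -> Prop.

Lemma ig_0 S : ideal_gen S 0.
Proof. exists 0%N, (fun _ => 0), (fun _ => 0); split; [by case|by rewrite big_ord0]. Qed.

Lemma ig_gen S f : S f -> ideal_gen S f.
Proof. move=> Sf; exists 1%N, (fun _ => 1), (fun _ => f); split=> //.
by rewrite big_ord1 mul1r. Qed.

Lemma ig_mul S h f : ideal_gen S f -> ideal_gen S (h * f).
Proof. case=> n [c [g [Sg ->]]]; exists n, (fun i => h * c i), g; split=> //.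
by rewrite mulr_sumr; apply: eq_bigr => i _; rewrite mulrA. Qed.

Lemma ig_add S f g : ideal_gen S f -> ideal_gen S g -> ideal_gen S (f + g).
Proof.
case=> n1 [c1 [g1 [S1 ->]]]; case=> n2 [c2 [g2 [S2 ->]]].
exists (n1 + n2)%N, (fun i => match split i with inl j => c1 j | inr j => c2 j end),
  (fun i => match split i with inl j => g1 j | inr j => g2 j end); split.
  by move=> i; case: (split i).
rewrite big_split_ord /=; congr (_ + _); apply: eq_bigr => i _.
  by move: (unsplitK (inl _ i : 'I_n1 + 'I_n2)) => /= ->.
by move: (unsplitK (inr _ i : 'I_n1 + 'I_n2)) => /= ->.
Qed.

Lemma ig_opp S f : ideal_gen S f -> ideal_gen S (- f).
Proof. by move=> /(ig_mul (-1)); rewrite mulN1r. Qed.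

Lemma ig_sum S n (F : 'I_n -> Kpoly d) :
  (forall i, ideal_gen S (F i)) -> ideal_gen S (\sum_(i < n) F i).
Proof. move=> H; elim/big_rec: _ => [|i x _ Hx]; [exact: ig_0|exact: ig_add]. Qed.

Lemma ig_closed S T : (forall x, S x -> ideal_gen T x) ->
  forall f, ideal_gen S f -> ideal_gen T f.
Proof. move=> H f [n [c [g [Sg ->]]]]; apply: ig_sum => i; exact/ig_mul/H. Qed.

Definition R S (a b : 'X_{1..d}) := ideal_gen S ('X_[a] - 'X_[b]).

Lemma R_refl S a : R S a a.
Proof. by rewrite /R subrr; apply: ig_0. Qed.
Lemma R_sym S a b : R S a b -> R S b a.
Proof. by rewrite /R => /ig_opp; rewrite opprB. Qed.
Lemma R_trans S a b c : R S a b -> R S b c -> R S a c.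
Proof. by rewrite /R => H1 H2; have := ig_add H1 H2; rewrite addrA subrK. Qed.
Lemma R_shift S a b m : R S a b -> R S (a + m)%MM (b + m)%MM.
Proof. by rewrite /R => /(ig_mul 'X_[m]); rewrite mulrBr -!mpolyXD ![(m + _)%MM]addmC. Qed.

End Ideal.
Section Int.
Variable d : nat.
Implicit Types (a b : 'X_{1..d}) (v : 'rV[int]_d).

Lemma expvecE a b j : expvec a b ord0 j = (a j)%:Z - (b j)%:Z.
Proof. by rewrite mxE. Qed.

Lemma vpn v j : (vpos v j)%:Z - (vneg v j)%:Z = v ord0 j /\
   (vpos v j = 0%N \/ vneg v j = 0%N).
Proof.
rewrite /vpos /vneg !mnmE; case: (ltrP (v ord0 j) 0) => H.
  by rewrite sub0r; split; [lia|left].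
by split; [lia|right].
Qed.

Lemma expvec_vpn v : expvec (vpos v) (vneg v) = v.
Proof. by apply/rowP => j; rewrite expvecE (proj1 (vpn v j)) (ord1 ord0). Qed.

Lemma mulzE v c j : (v *~ c) ord0 j = v ord0 j * c.
Proof. by rewrite -scaler_int mxE intz mulrC. Qed.

End Int.

Section Canc.
Variable d : nat.
Variable S : Kpoly d -> Prop.
Implicit Types (a b m : 'X_{1..d}).

Lemma R_eq a b a' b' : R S a b -> a = a' -> b = b' -> R S a' b'.
Proof. by move=> H <- <-. Qed.

Lemma R_pow P n : R S P 0%MM -> R S (P *+ n)%MM 0%MM.
Proof.
move=> HP; elim: n => [|n IH]; first by rewrite mulm0n; apply: R_refl.
apply: R_trans IH; apply: R_eq (R_shift (P *+ n)%MM HP) _ _.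
  by rewrite mulmS.
by rewrite add0m.
Qed.

Lemma R_cancel (P : 'X_{1..d}) a b m : (forall j, 0 < P j)%N -> R S P 0%MM ->
  R S (a + m)%MM (b + m)%MM -> R S a b.
Proof.
move=> Ppos HP H.
set K := mdeg m.
have Hle : (m <= P *+ K)%MM.
  apply/mnm_lepP => j; rewrite mulmnE.
  have : (m j <= K)%N by rewrite /K mdegE (bigD1 j) //= leq_addr.
  have := Ppos j; nia.
have HK := R_pow K HP.
have H1 : R S a (a + P *+ K)%MM.
  by apply: R_sym; apply: R_eq (R_shift a HK) _ _; rewrite ?add0m // addmC.
have H3 : R S (b + P *+ K)%MM b.
  by apply: R_eq (R_shift b HK) _ _; rewrite ?add0m // addmC.
have H2 : R S (a + P *+ K)%MM (b + P *+ K)%MM.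
  apply: R_eq (R_shift (P *+ K - m)%MM H) _ _;
  by apply/mnmP => j; have := mnm_lepP Hle j; rewrite !mnmE; lia.
exact: R_trans H1 (R_trans H2 H3).
Qed.

End Canc.

Section Part2.
Variables (d k : nat) (a b : 'I_k -> 'X_{1..d}).
Let vs i := expvec (a i) (b i).
Let S2 := fun f : Kpoly d => exists i, f = canon_binom (vs i).
Hypothesis Hpos : exists i, forall j : 'I_d, 0 < vs i ord0 j.

Definition Q (u : 'rV[int]_d) := forall x y, expvec x y = u -> R S2 x y.

Lemma gen2 i : R S2 (vpos (vs i)) (vneg (vs i)).
Proof. by apply: ig_gen; exists i. Qed.

Lemma canc2 x y m : R S2 (x + m)%MM (y + m)%MM -> R S2 x y.
Proof.
case: Hpos => i0 Hi0.
have Hn : vneg (vs i0) = 0%MM.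
  apply/mnmP => j; rewrite /vneg !mnmE.
  by rewrite ltNge (ltW (Hi0 j)).
apply: (R_cancel (P := vpos (vs i0))).
  move=> j; rewrite /vpos mnmE; have := Hi0 j.
  by rewrite le0r; case: (vs i0 ord0 j) => [[|n]|n].
by rewrite -Hn; apply: gen2.
Qed.

Lemma Q0 : Q 0.
Proof.
move=> x y H; have -> : x = y; last exact: R_refl.
apply/mnmP => j; move/rowP: H => /(_ j); rewrite /= !mxE; lia.
Qed.

Lemma Q_addp i u : Q u -> Q (vs i + u).
Proof.
move=> Hu x y H; move: (gen2 i) H; set v := vs i; clearbody v => G H.
apply: (@canc2 _ _ (vneg v)).
have H1 : R S2 (x + vneg v)%MM (y + vpos v)%MM.
  apply: Hu; apply/rowP => j; move/rowP: H => /(_ j).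
  have [E _] := vpn v j; have E' : (vpos v j)%:Z - (vneg v j)%:Z = v 0 j := E; rewrite !mxE !mnmDE; move: (v 0 j) (u 0 j) E' => vj uj; lia.
apply: R_trans H1 _.
by apply: R_eq (R_shift y G) _ _; rewrite addmC.
Qed.

Lemma Q_addn i u : Q u -> Q (- vs i + u).
Proof.
move=> Hu x y H; move: (gen2 i) H; set v := vs i; clearbody v => G H.
apply: (@canc2 _ _ (vpos v)).
have H1 : R S2 (x + vpos v)%MM (y + vneg v)%MM.
  apply: Hu; apply/rowP => j; move/rowP: H => /(_ j).
  have [E _] := vpn v j; have E' : (vpos v j)%:Z - (vneg v j)%:Z = v 0 j := E; rewrite !mxE !mnmDE; move: (v 0 j) (u 0 j) E' => vj uj; lia.
apply: R_trans H1 _.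
by apply: R_sym; apply: R_eq (R_shift y G) _ _; rewrite addmC.
Qed.

Lemma Q_iter (w : 'rV[int]_d) : (forall u, Q u -> Q (w + u)) ->
  forall n u, Q u -> Q (w *+ n + u).
Proof.
move=> Hw; elim=> [|n IH] u Hu; first by rewrite mulr0n add0r.
by rewrite mulrS -addrA; apply: Hw; apply: IH.
Qed.

Lemma Q_mul i c u : Q u -> Q (vs i *~ c + u).
Proof.
case: c => n Hu.
  by change (vs i *~ Posz n) with (vs i *+ n); apply: Q_iter => //; exact: Q_addp.
change (vs i *~ Negz n) with (- (vs i *+ n.+1)); rewrite -mulNrn.
by apply: Q_iter => //; exact: Q_addn.
Qed.

Lemma Q_span u : lattice_span vs u -> Q u.
Proof.
case=> c ->; elim/big_rec: _ => [|j x _ Hx]; first exact: Q0.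
exact: Q_mul.
Qed.

Lemma part2 : same_ideal (ideal_gen S2) (lattice_ideal (lattice_span vs)).
Proof.
move=> f; split.
  apply: ig_closed => {}f; case=> i ->; apply: ig_gen; exists (vpos (vs i)), (vneg (vs i)); split=> //.
  rewrite expvec_vpn; exists (fun j => (j == i)%:Z).
  rewrite (bigD1 i) //= big1 => [|j /negbTE ->]; first by rewrite eqxx mulr1z addr0.
  by rewrite mulr0z.
apply: ig_closed => {}f [x [y [HL ->]]]; exact: (Q_span HL (erefl _)).
Qed.

End Part2.

Section Part1.
Variables (d : nat) (v : 'rV[int]_d).
Let S1 := fun f : Kpoly d => f = canon_binom v.
Let L1 := lattice_span (fun _ : 'I_1 => expvec (vpos v) (vneg v)).

Lemma gen1 : R S1 (vpos v) (vneg v).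
Proof. exact: ig_gen. Qed.

Lemma P1 n : forall x y, expvec x y = v *~ Posz n -> R S1 x y.
Proof.
elim: n => [|n IH] x y H.
  have -> : x = y; last exact: R_refl.
  apply/mnmP => j; move/rowP: H => /(_ j); rewrite mulzE !mxE mulr0; lia.
have Hj : forall j, (x j)%:Z - (y j)%:Z = (vpos v j)%:Z * n.+1%:Z - (vneg v j)%:Z * n.+1%:Z.
  move=> j; move/rowP: H => /(_ j); rewrite mulzE !mxE => ->.
  by have [E _] := vpn v j; rewrite (ord1 0) -E mulrBl.
have Hle : (vpos v <= x)%MM /\ (vneg v <= y)%MM.
  split; apply/mnm_lepP => j; have := Hj j; have [_ [->|->]] := vpn v j; nia.
set x' := (x - vpos v)%MM; set y' := (y - vneg v)%MM.
have H' : R S1 x' y'.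
  apply: IH; apply/rowP => j; rewrite mulzE expvecE (mnmBE j x) (mnmBE j y).
  have := Hj j; have := mnm_lepP (proj1 Hle) j; have := mnm_lepP (proj2 Hle) j.
  have [E _] := vpn v j; rewrite (ord1 0) -E. nia.
have H1 := R_shift (vpos v) H'.
have H2 : R S1 (y' + vpos v)%MM (y' + vneg v)%MM.
  by apply: R_eq (R_shift y' gen1) _ _; rewrite addmC.
by apply: R_eq (R_trans H1 H2) _ _; rewrite submK //; case: Hle.
Qed.

Lemma part1a : same_ideal (ideal_gen S1) (lattice_ideal L1).
Proof.
move=> f; split.
  apply: ig_closed => {}f ->; apply: ig_gen; exists (vpos v), (vneg v); split=> //.
  by exists (fun _ => 1); rewrite big_ord1.
apply: ig_closed => {}f [x [y [[c Hc] ->]]].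
move: Hc; rewrite big_ord1 expvec_vpn; case: (c ord0) => n Hc.
  exact: (P1 Hc).
apply: R_sym; apply: (@P1 n.+1); apply/rowP => j; move/rowP: Hc => /(_ j).
rewrite !mulzE !mxE NegzE; lia.
Qed.

End Part1.

Section Prim.
Variable d : nat.

Lemma nonunit (f : Kpoly d) : (1 < msize f)%N -> ~ is_unit_poly f.
Proof.
move=> Hf [h Hh].
have fnz : f != 0 by rewrite -msize_poly_eq0; lia.
have hnz : h != 0 by apply: contra_eq_neq Hh => ->; rewrite mulr0 eq_sym oner_neq0.
have := msizeM fnz hnz; rewrite Hh msize1.
have : (msize h != 0)%N by rewrite msize_poly_eq0.
set m1 := mmeasure _ f in Hf *; set m2 := mmeasure _ h; lia.
Qed.

Lemma prim (v : 'rV[int]_d) : irreducible_mpoly (canon_binom v) ->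
  forall (g : int) w, v = w *~ g -> (`|g| <= 1)%N.
Proof.
move=> [pnz [_ Hirr]] g w Hv; rewrite leqNgt; apply/negP => Hg.
wlog: g w Hv Hg / 0 < g.
  move=> H; case: (ltrP 0 g) => Hg0; first exact: (H g w).
  apply: (H (-g) (-w)).
  - by rewrite Hv mulrNz mulNrz opprK.
  - by rewrite abszN.
  - move: Hg0 Hg; case: g {H Hv} => n; lia.
case: g Hv Hg => // n Hv Hg _.
change (w *~ Posz n) with (w *+ n) in Hv.
set A := vpos w; set B := vneg w.
have HvA : vpos v = (A *+ n)%MM.
  apply/mnmP => j; rewrite mulmnE /A /vpos !mnmE Hv mulmxnE -mulr_natr natz.
  by move: (w ord0 j) => z; case: ifP => h1; case: ifP => h2; rewrite ?abszM /=; nia.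
have HvB : vneg v = (B *+ n)%MM.
  apply/mnmP => j; rewrite mulmnE /B /vneg !mnmE Hv mulmxnE -mulr_natr natz.
  by move: (w ord0 j) => z; case: ifP => h1; case: ifP => h2; rewrite ?abszM /=; nia.
have Hp : canon_binom v = 'X_[A *+ n] - 'X_[B *+ n] by rewrite /canon_binom /pdbinom HvA HvB.
have AnB : (A *+ n)%MM != (B *+ n)%MM.
  by apply: contra_neq pnz => E; rewrite Hp E subrr.
have AB : A != B by apply: contra_neq AnB => ->.
set f : Kpoly d := 'X_[A] - 'X_[B].
set Sm : Kpoly d := \sum_(i < n) 'X_[A] ^+ (n.-1 - i) * 'X_[B] ^+ i.
have HpfS : canon_binom v = f * Sm by rewrite Hp -!mpolyXn subrXX.
have inA : A \in msupp f.
  by rewrite mcoeff_msupp mcoeffB !mcoeffX eqxx (eq_sym B A) (negbTE AB) subr0 oner_neq0.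
have inB : B \in msupp f.
  by rewrite mcoeff_msupp mcoeffB !mcoeffX eqxx (negbTE AB) sub0r oppr_eq0 oner_neq0.
have degpos : (0 < mdeg A + mdeg B)%N.
  rewrite lt0n; apply: contra_neq AB => /eqP; rewrite addn_eq0 => /andP[].
  by rewrite !mdeg_eq0 => /eqP -> /eqP ->.
have hA := msize_mdeg_lt inA; have hB := msize_mdeg_lt inB.
have fle : (msize f <= (maxn (mdeg A) (mdeg B)).+1)%N.
  apply: leq_trans (msizeD_le _ _) _; rewrite msizeN !msizeX; lia.
have fnz : f != 0 by rewrite -msize_poly_eq0; lia.
have Snz : Sm != 0 by apply: contra_neq pnz => E; rewrite HpfS E mulr0.
have inpA : (A *+ n)%MM \in msupp (canon_binom v).
  by rewrite Hp mcoeff_msupp mcoeffB !mcoeffX eqxx (eq_sym (B *+ n)%MM) (negbTE AnB) subr0 oner_neq0.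
have inpB : (B *+ n)%MM \in msupp (canon_binom v).
  by rewrite Hp mcoeff_msupp mcoeffB !mcoeffX eqxx (negbTE AnB) sub0r oppr_eq0 oner_neq0.
have hpA := msize_mdeg_lt inpA; have hpB := msize_mdeg_lt inpB.
rewrite !mdegMn in hpA hpB.
have hM : msize (canon_binom v) = (msize f + msize Sm).-1.
  by rewrite HpfS; exact: msizeM.
have Spos : (msize Sm != 0)%N by rewrite msize_poly_eq0.
case: (Hirr f Sm HpfS); apply: nonunit; first by clear -hA hB degpos; lia.
rewrite ltnNge; apply/negP => S1.
have : msize (canon_binom v) = msize f by rewrite hM; lia.
move=> E; rewrite E in hpA hpB.
move: Hg => /= Hg.
case: (leqP (mdeg A) (mdeg B)) => h; nia.
Qed.

End Prim.

Section Sat1.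
Variables (d : nat) (v : 'rV[int]_d).
Let L1 := lattice_span (fun _ : 'I_1 => expvec (vpos v) (vneg v)).

Lemma sat_sub : irreducible_mpoly (canon_binom v) -> forall u, Sat L1 u -> L1 u.
Proof.
move=> Hirr u [c [cnz [e He]]]; move: He; rewrite big_ord1 expvec_vpn.
move: (e ord0) => e0 He.
have Huv : forall j, u ord0 j * c = v ord0 j * e0.
  by move=> j; move/rowP: He => /(_ j); rewrite !mulzE.
set g := gcdz c e0.
have gnz : g != 0 by rewrite gcdz_eq0 negb_and cnz.
have [s [t Bez]] := Bezoutz c e0.
set c' := (c %/ g)%Z; set e' := (e0 %/ g)%Z.
have Hc : c' * g = c by apply: divzK; apply: dvdz_gcdl.
have He' : e' * g = e0 by apply: divzK; apply: dvdz_gcdr.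
set w : 'rV[int]_d := \row_j (s * v ord0 j + t * u ord0 j).
have Hvw : v = w *~ c'.
  apply/rowP => j; rewrite mulzE mxE; apply: (mulIf gnz).
  rewrite -mulrA Hc /g -Bez mulrDr [v ord0 j * (t * e0)]mulrCA -Huv; ring.
have := prim Hirr Hvw => Hc1.
have c'nz : c' != 0 by apply: contra_neq cnz => E; rewrite -Hc E mul0r.
have Hu : forall j, u ord0 j * c' = v ord0 j * e'.
  move=> j; apply: (mulIf gnz); rewrite -mulrA Hc Huv -He'; ring.
exists (fun _ => e' * c'); rewrite big_ord1 expvec_vpn; apply/rowP => j.
rewrite mulzE; have := Hu j; rewrite (ord1 0).
move: (u ord0 j) (v ord0 j) => x y.
have : c' = 1 \/ c' = -1 by move: Hc1 c'nz; lia.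
by case=> ->; lia.
Qed.

End Sat1.

Theorem proposition5p5 :
  (forall (d : nat) (v : 'rV[int]_d),
     let p := canon_binom v in
     let I := ideal_gen (fun f => f = p) in
     let L := lattice_span (fun _ : 'I_1 => expvec (vpos v) (vneg v)) in
     same_ideal I (lattice_ideal L) /\
     (irreducible_mpoly p -> same_ideal I (lattice_ideal (Sat L)))) /\
  (forall (d k : nat) (a b : 'I_k -> 'X_{1..d}),
     let vs := fun i => expvec (a i) (b i) in
     (exists i, forall j : 'I_d, 0 < vs i ord0 j) ->
     let J := ideal_gen (fun f => exists i, f = canon_binom (vs i)) in
     let L := lattice_span vs in
     same_ideal J (lattice_ideal L)).
Proof.
split.
  move=> d v p I L; split; first exact: part1a.
  move=> Hirr f; have E := part1a v f; split.
    move/E; apply: ig_closed => f0 [x [y [HL ->]]].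
    apply: ig_gen; exists x, y; split=> //.
    by exists 1; rewrite mulr1z.
  move=> H; apply/E; move: H; apply: ig_closed => f0 [x [y [HL ->]]].
  apply: ig_gen; exists x, y; split=> //.
  exact: sat_sub.
move=> d k a b vs Hpos J L; exact: part2 Hpos.
Qed.
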